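(* Let $S,T$ be $\mathbb{G}$-stopping times and let $T'=T_{\{S\le T<\infty\}}$. Suppose that $[S,T)\in\mathcal{L}^o$, that $[T']\in\mathcal{L}^o$, and that the process $\mathbf{1}_{[T']}$ satisfies the optional splitting formula on $[S,T]$. Then $[S,T]\in\mathcal{L}^o$.
   Context: Let $(\Omega,\mathcal{A},\mathbb{Q})$ be a probability space with a right-continuous filtration $\mathbb{F}=(\mathcal{F}_t)_{t\ge0}$ such that $\mathcal{F}_0$ contains $\mathcal{N}^{\mathcal{F}_\infty}$, where for a $\sigma$-algebra $\mathcal{T}\subset\mathcal{A}$, $\mathcal{N}^{\mathcal{T}}$ denotes the $\sigma$-algebra generated by all subsets of $\mathcal{T}$-measurable $\mathbb{Q}$-null sets. Let $\tau$ be a random variable with values in $[0,\infty]$, let $\mathcal{N}=\mathcal{N}^{\sigma(\tau)\vee\mathcal{F}_\infty}$, and let $\mathbb{G}=(\mathcal{G}_t)_{t\ge0}$ with $\mathcal{G}_t=\mathcal{N}\vee\bigcap_{s>t}(\mathcal{F}_s\vee\sigma(\tau\wedge s))$. Identities are understood up to $\mathcal{N}$-measurable $\mathbb{Q}$-null sets. For a function $Y''$ on $[0,\infty]\times(\mathbb{R}_+\times\Omega)$, $Y''(\tau)$ denotes $(t,\omega)\mapsto Y''(\tau(\omega),t,\omega)$. A $\mathbb{G}$-optional process $Y$ satisfies the optional splitting formula on a $\mathbb{G}$-optional set $A$ if there exist $Y'\in\mathcal{O}(\mathbb{F})$ and a $\mathcal{B}[0,\infty]\otimes\mathcal{O}(\mathbb{F})$-measurable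 $Y''$ with $Y\mathbf{1}_A=(Y'\mathbf{1}_{[0,\tau)}+Y''(\tau)\mathbf{1}_{[\tau,\infty)})\mathbf{1}_A$; $\mathcal{L}^o$ is the family of $\mathbb{G}$-optional sets on which every $\mathbb{G}$-optional process satisfies it. For a $\mathbb{G}$-stopping time $T$ and $A\in\mathcal{G}_T$, $T_A=T$ on $A$ and $T_A=\infty$ on $A^c$; $[R]$ denotes the graph $\{(t,\omega)\in\mathbb{R}_+\times\Omega:t=R(\omega)\}$. *)

(* Defs.v *)
From HB Require Import structures.
From mathcomp Require Import all_boot all_order all_algebra.
From mathcomp Require Import all_classical all_reals all_analysis measurable_realfun.
Set Implicit Arguments. Unset Strict Implicit. Unset Printing Implicit Defensive.
Import Order.TTheory GRing.Theory Num.Theory.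
Local Open Scope classical_set_scope.
Local Open Scope ring_scope.
Local Open Scope ereal_scope.

Section Defs.
Context {R : realType} {d : measure_display} {Omega : measurableType d}.

Definition sgen {X : Type} (G : set (set X)) : set (set X) := <<s G >>.

Definition sjoin {X : Type} (G H : set (set X)) : set (set X) := sgen (G `|` H).

Definition sigma_of (f : Omega -> \bar R) : set (set Omega) :=
  [set f @^-1` B | B in [set B : set (\bar R) | measurable B]].

(** time index: a filtration is indexed by t : R, only t >= 0 matters *)
Definition is_filtration (F : R -> set (set Omega)) : Prop :=
  (forall t, (0 <= t)%R -> sigma_algebra setT (F t) /\ F t `<=` measurable) /\
  (forall s t A, (0 <= s)%R -> (s <= t)%R -> F s A -> F t A).

Definition filt_right_continuous (F : R -> set (set Omega)) : Prop :=
  forall t, (0 <= t)%R -> forall A, F t A <-> (forall s, (t < s)%R -> F s A).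

Definition F_infty (F : R -> set (set Omega)) : set (set Omega) :=
  sgen [set A | exists t, (0 <= t)%R /\ F t A].

Definition nullsig (Q : probability Omega R) (T : set (set Omega)) : set (set Omega) :=
  sgen [set B | exists M, T M /\ measurable M /\ Q M = 0 /\ B `<=` M].

Definition Gfilt (Q : probability Omega R) (F : R -> set (set Omega))
  (tau : Omega -> \bar R) (t : R) : set (set Omega) :=
  sjoin (nullsig Q (sjoin (sigma_of tau) (F_infty F)))
        [set A | forall s, (t < s)%R ->
            sjoin (F s) (sigma_of (fun w => mine (tau w) s%:E)) A].

Definition stopping_time (H : R -> set (set Omega)) (T : Omega -> \bar R) : Prop :=
  (forall w, 0 <= T w) /\
  (forall t, (0 <= t)%R -> H t [set w | T w <= t%:E]).

(** stochastic intervals, subsets of R * Omega (only t >= 0 points occur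
    when the bounds are >= 0) *)
Definition sint_co (S T : Omega -> \bar R) : set (R * Omega) :=
  [set p | S p.2 <= p.1%:E < T p.2].
Definition sint_cc (S T : Omega -> \bar R) : set (R * Omega) :=
  [set p | S p.2 <= p.1%:E <= T p.2].
Definition sgraph (T : Omega -> \bar R) : set (R * Omega) :=
  [set p | p.1%:E = T p.2].

Definition optional (H : R -> set (set Omega)) : set (set (R * Omega)) :=
  sgen [set [set p | T p.2 <= p.1%:E] | T in stopping_time H].

Definition meas_wrt {X : Type} (S : set (set X)) (f : X -> R) : Prop :=
  forall B : set R, measurable B -> S (f @^-1` B).

Definition prod_opt (F : R -> set (set Omega)) : set (set (\bar R * (R * Omega))) :=
  sgen [set E | exists (B : set (\bar R)) (C : set (R * Omega)),
        measurable B /\ optional F C /\ E = [set x | B x.1 /\ C x.2]].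

Definition null_wrt (Q : probability Omega R) (T : set (set Omega)) (E : set Omega) : Prop :=
  exists M, T M /\ measurable M /\ Q M = 0 /\ E `<=` M.

Definition splits (Q : probability Omega R) (F : R -> set (set Omega))
  (tau : Omega -> \bar R) (Y : R * Omega -> R) (A : set (R * Omega)) : Prop :=
  exists (Y' : R * Omega -> R) (Y'' : \bar R -> R * Omega -> R),
    meas_wrt (optional F) Y' /\
    meas_wrt (prod_opt F) (fun x => Y'' x.1 x.2) /\
    null_wrt Q (sjoin (sigma_of tau) (F_infty F))
      [set w | exists t, (0 <= t)%R /\ A (t, w) /\
         Y (t, w) <> (if t%:E < tau w then Y' (t, w) else Y'' (tau w) (t, w))].

Definition Lo (Q : probability Omega R) (F : R -> set (set Omega))
  (tau : Omega -> \bar R) (A : set (R * Omega)) : Prop :=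
  optional (Gfilt Q F tau) A /\
  forall Y : R * Omega -> R, meas_wrt (optional (Gfilt Q F tau)) Y ->
    splits Q F tau Y A.

Definition restrict_ST (S T : Omega -> \bar R) : Omega -> \bar R :=
  fun w => if (S w <= T w) && (T w < +oo) then T w else +oo.

End Defs.

(* Main.v *)
Require Import Defs.
From HB Require Import structures.
From mathcomp Require Import all_boot all_order all_algebra.
From mathcomp Require Import all_classical all_reals all_analysis measurable_realfun.
Import Order.TTheory GRing.Theory Num.Theory.
Local Open Scope classical_set_scope.
Local Open Scope ring_scope.

HB.instance Definition _ (R : realType) := isPointed.Build (Real.sort R) 0%R.

Section Helpers.
Context {R : realType}.

Lemma mw_mf {X : pointedType} (G : set (set X)) (f : X -> R) :
  meas_wrt (sgen G) f -> measurable_fun (setT : set (g_sigma_algebraType G)) f.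
Proof. by move=> h _ B mB; rewrite setTI; exact: h. Qed.

Lemma mf_mw {X : pointedType} (G : set (set X)) (f : X -> R) :
  measurable_fun (setT : set (g_sigma_algebraType G)) f -> meas_wrt (sgen G) f.
Proof. by move=> h B mB; have := h measurableT B mB; rewrite setTI. Qed.

Lemma mw_comb {X : pointedType} (G : set (set X)) (f1 f2 z : X -> R) :
  meas_wrt (sgen G) f1 -> meas_wrt (sgen G) f2 -> meas_wrt (sgen G) z ->
  meas_wrt (sgen G) (fun x => f1 x * (1 - z x) + f2 x * z x).
Proof.
move=> /mw_mf h1 /mw_mf h2 /mw_mf hz; apply: mf_mw.
apply: measurable_funD; apply: measurable_funM => //.
by apply: measurable_funB => //; exact: measurable_cst.
Qed.

Lemma sgenU {X : Type} (G : set (set X)) (A B : set X) :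
  sgen G A -> sgen G B -> sgen G (A `|` B).
Proof.
move=> hA hB; rewrite -bigcup2E; apply: sigma_algebra_bigcup => -[|[|n]] //=.
exact: sigma_algebra0.
Qed.

End Helpers.
Arguments sgenU {X G A B}.
Arguments mw_comb {R X G f1 f2 z}.


Lemma cc_split (R : realType) (d : measure_display) (Omega : measurableType d) (S T : Omega -> \bar R) :
  sint_cc S T = sint_co S T `|` sgraph (restrict_ST S T).
Proof.
apply/seteqP; split => -[t w] /=; rewrite /sint_cc /sint_co /sgraph /restrict_ST /=.
- move=> /andP[St tT]; move: tT; rewrite le_eqVlt => /orP[/eqP tT|tT].
    right; rewrite -tT St /=; rewrite ltry; by [].
  by left; rewrite St tT.
- case=> [/andP[St tT]|]; first by rewrite St (ltW tT).
  case: ifP => // /andP[ST _] ->; by rewrite ST lexx.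
Qed.

Local Open Scope ereal_scope.

Theorem mainTheorem8 (R : realType) (d : measure_display) (Omega : measurableType d)
  (Q : probability Omega R) (Filt : R -> set (set Omega)) (tau : Omega -> \bar R) :
  is_filtration Filt -> filt_right_continuous Filt ->
  nullsig Q (F_infty Filt) `<=` Filt 0%R ->
  sigma_of tau `<=` measurable -> (forall w, 0 <= tau w) ->
  forall S T : Omega -> \bar R,
    stopping_time (Gfilt Q Filt tau) S -> stopping_time (Gfilt Q Filt tau) T ->
    Lo Q Filt tau (sint_co S T) ->
    Lo Q Filt tau (sgraph (restrict_ST S T)) ->
    splits Q Filt tau (\1_(sgraph (restrict_ST S T)) : R * Omega -> R) (sint_cc S T) ->
    Lo Q Filt tau (sint_cc S T).
Proof.
move=> _ _ _ _ _ S T _ _ [opt1 L1] [opt2 L2] hZ.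
split; first by rewrite cc_split; exact: (sgenU opt1 opt2).
move=> Y hY.
have [Y1' [Y1'' [m1' [m1'' [M1 [sM1 [mM1 [QM1 sub1]]]]]]]] := L1 Y hY.
have [Y2' [Y2'' [m2' [m2'' [M2 [sM2 [mM2 [QM2 sub2]]]]]]]] := L2 Y hY.
have [Z' [Z'' [mz' [mz'' [M3 [sM3 [mM3 [QM3 sub3]]]]]]]] := hZ.
exists (fun p => Y1' p * (1 - Z' p) + Y2' p * Z' p)%R,
  (fun x p => Y1'' x p * (1 - Z'' x p) + Y2'' x p * Z'' x p)%R.
split; first exact: (mw_comb m1' m2' mz').
split; first exact: (mw_comb m1'' m2'' mz'').
exists (M1 `|` M2 `|` M3); split; first exact: (sgenU (sgenU sM1 sM2) sM3).
split; first exact: (measurableU _ _ (measurableU _ _ mM1 mM2) mM3).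
split.
  apply: null_set_setU => //; first exact: (measurableU _ _ mM1 mM2).
  exact: null_set_setU.
move=> w [t [t0 [Acc Hne]]].
have [//|nM] := pselect ((M1 `|` M2 `|` M3) w).
exfalso; apply: Hne.
have n1 : ~ M1 w by move=> h; apply: nM; left; left.
have n2 : ~ M2 w by move=> h; apply: nM; left; right.
have n3 : ~ M3 w by move=> h; apply: nM; right.
have e1 : sint_co S T (t, w) -> Y (t, w) =
   (if t%:E < tau w then Y1' (t, w) else Y1'' (tau w) (t, w)).
  by move=> h; apply: contrapT => hn; apply: n1; apply: sub1; exists t.
have e2 : sgraph (restrict_ST S T) (t, w) -> Y (t, w) =
   (if t%:E < tau w then Y2' (t, w) else Y2'' (tau w) (t, w)).
  by move=> h; apply: contrapT => hn; apply: n2; apply: sub2; exists t.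
have e3 : (\1_(sgraph (restrict_ST S T)) (t, w) : R) =
   (if t%:E < tau w then Z' (t, w) else Z'' (tau w) (t, w)).
  by apply: contrapT => hn; apply: n3; apply: sub3; exists t.
have [g|ng] := pselect (sgraph (restrict_ST S T) (t, w)).
  rewrite (e2 g); move: e3; rewrite indicE mem_set //.
  case: (t%:E < tau w) => <-.
    by rewrite subrr mulr0 add0r mulr1.
  by rewrite subrr mulr0 add0r mulr1.
have co : sint_co S T (t, w).
  by move: Acc; rewrite cc_split => -[].
rewrite (e1 co); move: e3; rewrite indicE memNset //.
case: (t%:E < tau w) => <-.
  by rewrite subr0 mulr1 mulr0 addr0.
by rewrite subr0 mulr1 mulr0 addr0.
Qed.
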